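(* For every $N=3,4,\dots$ and all pairwise distinct indices $\alpha,\beta,\gamma$ (with associated nonzero complex variables $\xi_\alpha,\xi_\beta,\xi_\gamma$ at which all quantities are defined), the $N^2\times N^2$ matrices $\mathbf{R}$ satisfy (a) $(\mathbf{R}_{\beta\alpha}\otimes\mathbf{I}_N)(\mathbf{R}_{\alpha\beta}\otimes\mathbf{I}_N)=(\mathbf{I}_N\otimes\mathbf{R}_{\beta\alpha})(\mathbf{I}_N\otimes\mathbf{R}_{\alpha\beta})=\mathbf{I}_{N^3}$; (b) (Yang–Baxter equation) $(\mathbf{R}_{\gamma\beta}\otimes\mathbf{I}_N)(\mathbf{I}_N\otimes\mathbf{R}_{\gamma\alpha})(\mathbf{R}_{\beta\alpha}\otimes\mathbf{I}_N)=(\mathbf{I}_N\otimes\mathbf{R}_{\beta\alpha})(\mathbf{R}_{\gamma\alpha}\otimes\mathbf{I}_N)(\mathbf{I}_N\otimes\mathbf{R}_{\gamma\beta})$.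
   Context: Fix $0<p<1$, $q=1-p$. For nonzero complex $\xi_\alpha,\xi_\beta$ set $D=p+q\xi_\alpha\xi_\beta-\xi_\alpha$ and $S_{\beta\alpha}=-\frac{p+q\xi_\alpha\xi_\beta-\xi_\beta}{D}$, $P_{\beta\alpha}=\frac{(p-q\xi_\alpha)(\xi_\beta-1)}{D}$, $Q_{\beta\alpha}=\frac{(p-q\xi_\beta)(\xi_\alpha-1)}{D}$, $T_{\beta\alpha}=\frac{\xi_\beta-\xi_\alpha}{D}$. $\mathbf{R}_{\beta\alpha}$ is the $N^2\times N^2$ matrix with rows and columns indexed by two-letter words $ij$ over $\{1,\dots,N\}$ in lexicographic order, with entries $[\mathbf{R}_{\beta\alpha}]_{ij,kl}=S_{\beta\alpha}$ if $kl=ij$, $i=j$; $P_{\beta\alpha}$ if $kl=ij$, $i<j$; $Q_{\beta\alpha}$ if $kl=ij$, $i>j$; $pT_{\beta\alpha}$ if $kl=ji$, $i<j$; $qT_{\beta\alpha}$ if $kl=ji$, $i>j$; and $0$ otherwise. $\otimes$ is the Kronecker product, with rows/columns of $N^3\times N^3$ matrices indexed by three-letter words in lexicographic order. *)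

(* Defs.v *)
From HB Require Import structures.
From mathcomp Require Import all_boot all_order all_algebra.
From mathcomp Require Import complex.
Set Implicit Arguments. Unset Strict Implicit. Unset Printing Implicit Defensive.
Import Order.TTheory GRing.Theory Num.Theory.
Local Open Scope ring_scope.

Section Defs.
Variable F : nzRingType.

(* entry of a matrix addressed by natural-number indices (0 outside range) *)
Definition mxnat {m n : nat} (A : 'M[F]_(m, n)) (r c : nat) : F :=
  match @insub _ (fun k => k < m)%N 'I_m r, @insub _ (fun k => k < n)%N 'I_n c with
  | Some i, Some j => A i j
  | _, _ => 0
  end.

Definition kron {m1 n1 m2 n2 : nat} (A : 'M[F]_(m1, n1)) (B : 'M[F]_(m2, n2))
  : 'M[F]_(m1 * m2, n1 * n2) :=
  \matrix_(i, j) (mxnat A (i %/ m2) (j %/ n2) * mxnat B (i %% m2) (j %% n2)).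
End Defs.

Section RMatrix.
Variable R : rcfType.
Local Notation C := (R[i]).

(* p is real, q = 1 - p; xa = xi_alpha, xb = xi_beta *)
Definition Dden (p : R) (xa xb : C) : C := (p%:C)%C + ((1 - p)%:C)%C * xa * xb - xa.
Definition Scoef (p : R) (xb xa : C) : C :=
  - (((p%:C)%C + ((1 - p)%:C)%C * xa * xb - xb) / Dden p xa xb).
Definition Pcoef (p : R) (xb xa : C) : C :=
  ((p%:C)%C - ((1 - p)%:C)%C * xa) * (xb - 1) / Dden p xa xb.
Definition Qcoef (p : R) (xb xa : C) : C :=
  ((p%:C)%C - ((1 - p)%:C)%C * xb) * (xa - 1) / Dden p xa xb.
Definition Tcoef (p : R) (xb xa : C) : C := (xb - xa) / Dden p xa xb.

(* R_{beta alpha} (Rmx p N xb xa); row index a encodes the word ij with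
   a = i*N + j (i = a %/ N, j = a %% N), i.e. lexicographic order,
   letters 1..N shifted to 0..N-1 *)
Definition Rmx (p : R) (N : nat) (xb xa : C) : 'M[C]_(N * N) :=
  \matrix_(a, b)
    let i := (a %/ N)%N in let j := (a %% N)%N in
    let k := (b %/ N)%N in let l := (b %% N)%N in
    if (k == i) && (l == j) then
      (if i == j then Scoef p xb xa
       else if (i < j)%N then Pcoef p xb xa else Qcoef p xb xa)
    else if (k == j) && (l == i) then
      (if (i < j)%N then (p%:C)%C * Tcoef p xb xa else ((1 - p)%:C)%C * Tcoef p xb xa)
    else 0.
End RMatrix.

(* Main.v *)
Require Import Defs.
From HB Require Import structures.
From mathcomp Require Import all_boot all_order all_algebra.
From mathcomp Require Import complex.
From mathcomp Require Import ring lra zify.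
Set Implicit Arguments. Unset Strict Implicit.
Import Order.TTheory GRing.Theory Num.Theory.
Definition enc (N a b c : nat) : nat := (a * N + b) * N + c.

Lemma ab_div N a b : b < N -> (a * N + b) %/ N = a.
Proof. by move=> hb; rewrite divnMDl ?(divn_small hb) ?addn0 //; lia. Qed.
Lemma ab_mod N a b : b < N -> (a * N + b) %% N = b.
Proof. by move=> hb; rewrite modnMDl modn_small. Qed.
Lemma ab_lt N a b : a < N -> b < N -> a * N + b < N * N.
Proof. by move=> ha hb; nia. Qed.
Lemma enc_lt N a b c : a < N -> b < N -> c < N -> enc N a b c < N * N * N.
Proof. by move=> ha hb hc; rewrite /enc; nia. Qed.
Lemma enc_div N a b c : c < N -> enc N a b c %/ N = a * N + b.
Proof. exact: ab_div. Qed.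
Lemma enc_mod N a b c : c < N -> enc N a b c %% N = c.
Proof. exact: ab_mod. Qed.
Lemma enc_alt N a b c : enc N a b c = a * (N * N) + (b * N + c).
Proof. by rewrite /enc mulnDl -mulnA addnA. Qed.
Lemma enc_divNN N a b c : b < N -> c < N -> enc N a b c %/ (N * N) = a.
Proof. by move=> hb hc; rewrite enc_alt ab_div // ab_lt. Qed.
Lemma enc_modNN N a b c : b < N -> c < N -> enc N a b c %% (N * N) = b * N + c.
Proof. by move=> hb hc; rewrite enc_alt ab_mod // ab_lt. Qed.
Lemma enc_eq N a b c a' b' c' : b < N -> c < N -> b' < N -> c' < N ->
  (enc N a' b' c' == enc N a b c) = [&& a' == a, b' == b & c' == c].
Proof.
move=> hb hc hb' hc'; apply/eqP/and3P => [e|[/eqP-> /eqP-> /eqP->]] //.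
have e1 := congr1 (modn^~ N) e; have e2 := congr1 (divn^~ N) e.
rewrite /= !enc_mod // in e1; rewrite /= !enc_div // in e2.
have e3 := congr1 (modn^~ N) e2; have e4 := congr1 (divn^~ N) e2.
rewrite /= !ab_mod // in e3; rewrite /= !ab_div // in e4.
by rewrite e1 e3 e4 !eqxx.
Qed.
Lemma decomp N x : x < N * N * N ->
  exists a b c, [/\ a < N, b < N, c < N & x = enc N a b c].
Proof.
move=> hx; have hN : 0 < N by case: N hx => //; rewrite muln0.
exists (x %/ N %/ N), (x %/ N %% N), (x %% N); split.
- by rewrite !ltn_divLR // -mulnA mulnC mulnA.
- by rewrite ltn_mod.
- by rewrite ltn_mod.
by rewrite /enc -!divn_eq.
Qed.
Local Open Scope ring_scope.
Section G.
Variable F : nzRingType.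
Lemma mxnat_ord m n (A : 'M[F]_(m, n)) (i : 'I_m) (j : 'I_n) : mxnat A i j = A i j.
Proof.
rewrite /mxnat; case: insubP => [i' _ ei|]; last by rewrite ltn_ord.
case: insubP => [j' _ ej|]; last by rewrite ltn_ord.
by congr (A _ _); apply: val_inj.
Qed.
Lemma mxnat_lt m n (A : 'M[F]_(m, n)) r c (hr : (r < m)%N) (hc : (c < n)%N) :
  mxnat A r c = A (Ordinal hr) (Ordinal hc).
Proof. exact (mxnat_ord A (Ordinal hr) (Ordinal hc)). Qed.
Lemma mxnat_mul m n k (A : 'M[F]_(m, n)) (B : 'M[F]_(n, k)) r c :
  (r < m)%N -> (c < k)%N ->
  mxnat (A *m B) r c = \sum_(z < n) mxnat A r z * mxnat B z c.
Proof.
move=> hr hc; rewrite (mxnat_lt _ hr hc) mxE; apply: eq_bigr => z _.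
by rewrite (mxnat_ord A (Ordinal hr) z) (mxnat_ord B z (Ordinal hc)).
Qed.
Lemma mxnat_kron m1 n1 m2 n2 (A : 'M[F]_(m1, n1)) (B : 'M[F]_(m2, n2)) r c :
  (r < m1 * m2)%N -> (c < n1 * n2)%N ->
  mxnat (kron A B) r c = mxnat A (r %/ m2) (c %/ n2) * mxnat B (r %% m2) (c %% n2).
Proof. by move=> hr hc; rewrite (mxnat_lt _ hr hc) mxE. Qed.
Lemma mxnat_1 n r c : (r < n)%N -> (c < n)%N ->
  mxnat (1%:M : 'M[F]_n) r c = (r == c)%:R.
Proof. by move=> hr hc; rewrite (mxnat_lt _ hr hc) mxE. Qed.
Lemma mxnat_cast m n m' n' (e : (m = m') * (n = n')) (A : 'M[F]_(m, n)) r c :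
  mxnat (castmx e A) r c = mxnat A r c.
Proof.
case: e => e1 e2; move: (e1) (e2); case: m' / e1; case: n' / e2 => e1 e2.
by rewrite castmx_id.
Qed.
Lemma sum_ind n r (G : nat -> F) : (r < n)%N ->
  \sum_(z < n) (z == r :> nat)%:R * G z = G r.
Proof.
move=> hr; rewrite (bigD1 (Ordinal hr)) //= eqxx mul1r big1 ?addr0 // => z nz.
by rewrite (_ : (z == r :> nat) = false) ?mul0r //; exact: negbTE nz.
Qed.
End G.
Section S.
Variable R : rcfType.
Local Notation C := (R[i]).
Variable p : R.
Lemma rcB : (((1 - p)%:C)%C : C) = 1 - (p%:C)%C.
Proof. by rewrite rmorphB rmorph1. Qed.

Definition dco (xb xa : C) (i j : nat) : C :=
  if i == j then Scoef p xb xa else if (i < j)%N then Pcoef p xb xa else Qcoef p xb xa.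
Definition oco (xb xa : C) (i j : nat) : C :=
  if (i < j)%N then (p%:C)%C * Tcoef p xb xa else ((1 - p)%:C)%C * Tcoef p xb xa.
Definition op12 (xb xa : C) (g : nat -> nat -> nat -> C) (a b c : nat) : C :=
  dco xb xa a b * g a b c + (if a != b then oco xb xa a b * g b a c else 0).
Definition op23 (xb xa : C) (g : nat -> nat -> nat -> C) (a b c : nat) : C :=
  dco xb xa b c * g a b c + (if b != c then oco xb xa b c * g a c b else 0).

Ltac simp_cmp :=
  repeat match goal with
  | |- context [ (?u < ?v)%N ] =>
      first [ rewrite (_ : (u < v)%N = true); last by lia
            | rewrite (_ : (u < v)%N = false); last by lia ]
  | |- context [ (?u == ?v :> nat) ] =>
      first [ rewrite (_ : (u == v) = true); last by lia
            | rewrite (_ : (u == v) = false); last by lia ]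
  end.

Lemma unit12 (xa xb : C) g a b c :
  Dden p xa xb != 0 -> Dden p xb xa != 0 ->
  op12 xb xa (op12 xa xb g) a b c = g a b c.
Proof.
move=> h1 h2.
rewrite /op12 /dco /oco.
case: (ltngtP a b) => hab; [| |subst]; simp_cmp; rewrite /= ?eqxx /Scoef /Pcoef /Qcoef /Tcoef !rcB;
  move: h1 h2; rewrite /Dden !rcB => h1 h2; field; by rewrite ?h1 ?h2.
Qed.
Lemma ybe (xa xb xc : C) g a b c :
  Dden p xa xb != 0 -> Dden p xa xc != 0 -> Dden p xb xc != 0 ->
  op12 xc xb (op23 xc xa (op12 xb xa g)) a b c =
  op23 xb xa (op12 xc xa (op23 xc xb g)) a b c.
Proof.
move=> h1 h2 h3.
rewrite /op12 /op23 /dco /oco.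
case: (ltngtP a b) => hab; case: (ltngtP b c) => hbc; case: (ltngtP a c) => hac;
  try (exfalso; lia); subst; simp_cmp; rewrite /= ?eqxx /Scoef /Pcoef /Qcoef /Tcoef !rcB;
  move: h1 h2 h3; rewrite /Dden !rcB => h1 h2 h3; field; by rewrite ?h1 ?h2 ?h3.
Qed.

Definition rmxf (xb xa : C) (i j k l : nat) : C :=
  if (k == i) && (l == j) then dco xb xa i j
  else if (k == j) && (l == i) then oco xb xa i j else 0.

Lemma mxnat_Rmx N xb xa r c : (r < N * N)%N -> (c < N * N)%N ->
  mxnat (Rmx p N xb xa) r c = rmxf xb xa (r %/ N) (r %% N) (c %/ N) (c %% N).
Proof. by move=> hr hc; rewrite (mxnat_lt _ hr hc) mxE. Qed.

Lemma rmxf_eq xb xa a b a' b' (c c' : nat) :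
  rmxf xb xa a b a' b' * (c == c')%:R =
  dco xb xa a b * [&& a' == a, b' == b & c' == c]%:R +
  (if a != b then oco xb xa a b * [&& a' == b, b' == a & c' == c]%:R else 0).
Proof.
rewrite /rmxf (eq_sym c).
case: (a' =P a) => [?|na]; case: (b' =P b) => [?|nb]; case: (a =P b) => [?|nab]; subst;
 repeat match goal with
 | H : ~ (?x = ?y) |- context [?x == ?y] => rewrite (introF eqP H)
 | H : ~ (?x = ?y) |- context [?y == ?x] => rewrite (introF eqP (nesym H))
 end; rewrite /= ?eqxx ?andbT ?andbF ?mulr0 ?mul0r ?addr0 ?add0r //=.
all: try (by case: (c' == c); rewrite ?mulr1 ?mulr0).
by case: (a' == b); case: (b' == a); case: (c' == c); rewrite /= ?mulr1 ?mulr0 ?mul0r.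
Qed.

Lemma K12_entry N xb xa a b c z :
  (a < N)%N -> (b < N)%N -> (c < N)%N -> (z < N * N * N)%N ->
  mxnat (kron (Rmx p N xb xa) (1%:M : 'M_N)) (enc N a b c) z =
  dco xb xa a b * (z == enc N a b c)%:R +
  (if a != b then oco xb xa a b * (z == enc N b a c)%:R else 0).
Proof.
move=> ha hb hc hz; have [a' [b' [c' [ha' hb' hc' ->]]]] := decomp hz.
rewrite mxnat_kron ?enc_lt // !enc_div // !enc_mod // mxnat_1 //.
rewrite mxnat_Rmx ?ab_lt // !ab_div // !ab_mod // !enc_eq //.
exact: rmxf_eq.
Qed.

Lemma K23_entry N xb xa a b c z :
  (a < N)%N -> (b < N)%N -> (c < N)%N -> (z < N * N * N)%N ->
  mxnat (kron (1%:M : 'M_N) (Rmx p N xb xa)) (enc N a b c) z =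
  dco xb xa b c * (z == enc N a b c)%:R +
  (if b != c then oco xb xa b c * (z == enc N a c b)%:R else 0).
Proof.
move=> ha hb hc hz; have [a' [b' [c' [ha' hb' hc' ->]]]] := decomp hz.
rewrite mxnat_kron ?mulnA ?enc_lt // !enc_divNN // !enc_modNN // mxnat_1 //.
rewrite mxnat_Rmx ?ab_lt // !ab_div // !ab_mod // !enc_eq //.
rewrite mulrC rmxf_eq.
by case: (a' == a); rewrite /= ?andbT ?andbF.
Qed.

Lemma sum_row2 n (r1 r2 : nat) (d o : C) (bb : bool) (G : nat -> C) :
  (r1 < n)%N -> (r2 < n)%N ->
  \sum_(z < n) ((d * (z == r1 :> nat)%:R + (if bb then o * (z == r2 :> nat)%:R else 0)) * G z)
  = d * G r1 + (if bb then o * G r2 else 0).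
Proof.
move=> h1 h2.
rewrite (eq_bigr (fun z : 'I_n => (z == r1 :> nat)%:R * (d * G z) +
   (z == r2 :> nat)%:R * (if bb then o * G z else 0))); last first.
  by move=> z _; case: bb; ring.
by rewrite big_split /= (@sum_ind _ n r1 (fun z => d * G z) h1) (@sum_ind _ n r2 (fun z => if bb then o * G z else 0) h2).
Qed.

Lemma K12_row N n xb xa a b c (G : nat -> C) : n = (N * N * N)%N ->
  (a < N)%N -> (b < N)%N -> (c < N)%N ->
  \sum_(z < n) mxnat (kron (Rmx p N xb xa) (1%:M : 'M_N)) (enc N a b c) z * G z =
  op12 xb xa (fun a b c => G (enc N a b c)) a b c.
Proof.
move=> hn ha hb hc.
rewrite (eq_bigr (fun z : 'I_n => (dco xb xa a b * (z == enc N a b c :> nat)%:R +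
  (if a != b then oco xb xa a b * (z == enc N b a c :> nat)%:R else 0)) * G z)).
  by rewrite sum_row2 // hn enc_lt.
by move=> z _; rewrite K12_entry // -hn.
Qed.

Lemma K23_row N n xb xa a b c (G : nat -> C) : n = (N * N * N)%N ->
  (a < N)%N -> (b < N)%N -> (c < N)%N ->
  \sum_(z < n) mxnat (kron (1%:M : 'M_N) (Rmx p N xb xa)) (enc N a b c) z * G z =
  op23 xb xa (fun a b c => G (enc N a b c)) a b c.
Proof.
move=> hn ha hb hc.
rewrite (eq_bigr (fun z : 'I_n => (dco xb xa b c * (z == enc N a b c :> nat)%:R +
  (if b != c then oco xb xa b c * (z == enc N a c b :> nat)%:R else 0)) * G z)).
  by rewrite sum_row2 // hn enc_lt.
by move=> z _; rewrite K23_entry // -hn.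
Qed.


Lemma K12_rowM N n k xb xa a b c (B : 'M[C]_(n, k)) y : n = (N * N * N)%N ->
  (a < N)%N -> (b < N)%N -> (c < N)%N ->
  \sum_(z < n) mxnat (kron (Rmx p N xb xa) (1%:M : 'M_N)) (enc N a b c) z * mxnat B z y =
  op12 xb xa (fun a b c => mxnat B (enc N a b c) y) a b c.
Proof. move=> hn ha hb hc; exact (@K12_row N n xb xa a b c (fun z => mxnat B z y) hn ha hb hc). Qed.
Lemma K23_rowM N n k xb xa a b c (B : 'M[C]_(n, k)) y : n = (N * N * N)%N ->
  (a < N)%N -> (b < N)%N -> (c < N)%N ->
  \sum_(z < n) mxnat (kron (1%:M : 'M_N) (Rmx p N xb xa)) (enc N a b c) z * mxnat B z y =
  op23 xb xa (fun a b c => mxnat B (enc N a b c) y) a b c.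
Proof. move=> hn ha hb hc; exact (@K23_row N n xb xa a b c (fun z => mxnat B z y) hn ha hb hc). Qed.

Lemma op12_ext N xb xa g g' a b c :
  (forall a b c, (a < N)%N -> (b < N)%N -> (c < N)%N -> g a b c = g' a b c) ->
  (a < N)%N -> (b < N)%N -> (c < N)%N -> op12 xb xa g a b c = op12 xb xa g' a b c.
Proof. by move=> e ha hb hc; rewrite /op12 !e. Qed.
Lemma op23_ext N xb xa g g' a b c :
  (forall a b c, (a < N)%N -> (b < N)%N -> (c < N)%N -> g a b c = g' a b c) ->
  (a < N)%N -> (b < N)%N -> (c < N)%N -> op23 xb xa g a b c = op23 xb xa g' a b c.
Proof. by move=> e ha hb hc; rewrite /op23 !e. Qed.

Lemma K12_col N xb xa a b c y :
  (a < N)%N -> (b < N)%N -> (c < N)%N -> (y < N * N * N)%N ->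
  mxnat (kron (Rmx p N xb xa) (1%:M : 'M_N)) (enc N a b c) y =
  op12 xb xa (fun a b c => (enc N a b c == y)%:R) a b c.
Proof. by move=> *; rewrite K12_entry // /op12 ![y == _]eq_sym. Qed.
Lemma K23_col N xb xa a b c y :
  (a < N)%N -> (b < N)%N -> (c < N)%N -> (y < N * N * N)%N ->
  mxnat (kron (1%:M : 'M_N) (Rmx p N xb xa)) (enc N a b c) y =
  op23 xb xa (fun a b c => (enc N a b c == y)%:R) a b c.
Proof. by move=> *; rewrite K23_entry // /op23 ![y == _]eq_sym. Qed.

Lemma unit23 (xa xb : C) g a b c :
  Dden p xa xb != 0 -> Dden p xb xa != 0 ->
  op23 xb xa (op23 xa xb g) a b c = g a b c.
Proof.
move=> h1 h2.
rewrite /op23 /dco /oco.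
case: (ltngtP b c) => hab; [| |subst]; simp_cmp; rewrite /= ?eqxx /Scoef /Pcoef /Qcoef /Tcoef !rcB;
  move: h1 h2; rewrite /Dden !rcB => h1 h2; field; by rewrite ?h1 ?h2.
Qed.
End S.

Lemma mx_nat_eq (F : nzRingType) m n (A B : 'M[F]_(m, n)) :
  (forall r c, (r < m)%N -> (c < n)%N -> mxnat A r c = mxnat B r c) -> A = B.
Proof.
move=> h; apply/matrixP => i j; have := h i j (ltn_ord i) (ltn_ord j).
by rewrite !mxnat_ord.
Qed.

Theorem mainTheorem2 (R : rcfType) (p : R) (N : nat)
  (xa xb xc : R[i]) :
  0 < p -> p < 1 -> (3 <= N)%N ->
  xa != 0 -> xb != 0 -> xc != 0 ->
  (* all R-matrices among the three spectral variables are defined *)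
  Dden p xa xb != 0 -> Dden p xb xa != 0 ->
  Dden p xa xc != 0 -> Dden p xc xa != 0 ->
  Dden p xb xc != 0 -> Dden p xc xb != 0 ->
  (* (a) unitarity *)
  (kron (Rmx p N xb xa) (1%:M : 'M_N) *m kron (Rmx p N xa xb) (1%:M : 'M_N)
     = 1%:M
   /\ kron (1%:M : 'M_N) (Rmx p N xb xa) *m kron (1%:M : 'M_N) (Rmx p N xa xb)
     = 1%:M)
  /\
  (* (b) Yang-Baxter equation *)
  kron (Rmx p N xc xb) (1%:M : 'M_N)
    *m castmx (mulnA N N N, mulnA N N N) (kron (1%:M : 'M_N) (Rmx p N xc xa))
    *m kron (Rmx p N xb xa) (1%:M : 'M_N)
  = castmx (mulnA N N N, mulnA N N N)
      (kron (1%:M : 'M_N) (Rmx p N xb xa)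
       *m castmx (esym (mulnA N N N), esym (mulnA N N N))
            (kron (Rmx p N xc xa) (1%:M : 'M_N))
       *m kron (1%:M : 'M_N) (Rmx p N xc xb)).
Proof.
move=> hp0 hp1 hN _ _ _ hab hba hac hca hbc hcb.
have e3 : (N * (N * N) = N * N * N)%N by rewrite mulnA.
split; [split|].
- apply: mx_nat_eq => x y hx hy.
  have [a [b [c [ha hb hc ->]]]] := decomp hx.
  rewrite mxnat_mul ?enc_lt // K12_rowM // mxnat_1 ?enc_lt //.
  rewrite (@op12_ext _ p N xb xa _ (op12 p xa xb (fun a b c => (enc N a b c == y)%:R)) a b c) //.
    by rewrite unit12.
  by move=> *; rewrite K12_col.
- apply: mx_nat_eq => x y hx hy.
  rewrite e3 in hx hy.
  have [a [b [c [ha hb hc ->]]]] := decomp hx.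
  rewrite mxnat_mul ?e3 ?enc_lt // K23_rowM // mxnat_1 ?e3 ?enc_lt //.
  rewrite (@op23_ext _ p N xb xa _ (op23 p xa xb (fun a b c => (enc N a b c == y)%:R)) a b c) //.
    by rewrite unit23.
  by move=> *; rewrite K23_col.
apply: mx_nat_eq => x y hx hy.
have [a [b [c [ha hb hc ->]]]] := decomp hx.
rewrite -mulmxA mxnat_mul ?enc_lt // K12_rowM //.
rewrite (@op12_ext _ p N xc xb _ (op23 p xc xa (op12 p xb xa (fun a b c => (enc N a b c == y)%:R))) a b c) //; last first.
  move=> a' b' c' ha' hb' hc'; rewrite mxnat_mul ?enc_lt //.
  rewrite (eq_bigr (fun z : 'I_(N * N * N) => mxnat (kron (1%:M : 'M_N) (Rmx p N xc xa)) (enc N a' b' c') z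
     * mxnat (kron (Rmx p N xb xa) (1%:M : 'M_N)) z y)); last by move=> z _; rewrite mxnat_cast.
  rewrite K23_rowM //; apply: (@op23_ext _ p N) => // *; rewrite K12_col //.
rewrite mxnat_cast -mulmxA mxnat_mul ?e3 ?enc_lt // K23_rowM //.
rewrite (@op23_ext _ p N xb xa _ (op12 p xc xa (op23 p xc xb (fun a b c => (enc N a b c == y)%:R))) a b c) //; last first.
  move=> a' b' c' ha' hb' hc'; rewrite mxnat_mul ?e3 ?enc_lt //.
  rewrite (eq_bigr (fun z : 'I_(N * (N * N)) => mxnat (kron (Rmx p N xc xa) (1%:M : 'M_N)) (enc N a' b' c') z
     * mxnat (kron (1%:M : 'M_N) (Rmx p N xc xb)) z y)); last by move=> z _; rewrite mxnat_cast.
  rewrite K12_rowM //; apply: (@op12_ext _ p N) => // *; rewrite K23_col // -e3.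
by rewrite ybe.
Qed.
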